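(* Let $X$ be a rearrangement invariant space on $\mathbb N$ with the Fatou property. Then for every $f\in X$, $$\operatorname{dist}_X(f^*,X_a)=\operatorname{dist}_X(f,X_a).$$
   Context: A rearrangement invariant space on $\mathbb N$ (counting measure) is a Banach space $X$ of real sequences such that $|x|\le|y|$ coordinatewise, $y\in X$ imply $x\in X$, $\|x\|_X\le\|y\|_X$, containing a sequence with all coordinates nonzero, and such that whenever $x\in X$ and $y$ has the same distribution function as $x$ ($d_x(\lambda)=\#\{n:|x_n|>\lambda\}$), then $y\in X$ and $\|y\|_X=\|x\|_X$. Fatou property: if $0\le x^{(n)}\uparrow x$ coordinatewise, $x^{(n)}\in X$, $\sup_n\|x^{(n)}\|_X<\infty$, then $x\in X$ and $\|x^{(n)}\|_X\uparrow\|x\|_X$. The non-increasing rearrangement is $f^*=(f^*_n)$ with $f^*_n=\inf\{\lambda>0:d_f(\lambda)<n\}$. $X_a$ is the ideal of order continuous elements: $x\in X_a$ iff for every sequence $0\le x^{(n)}\le|x|$ with $x^{(n)}\downarrow0$ coordinatewise one has $\|x^{(n)}\|_X\to0$. $\operatorname{dist}_X(h,X_a)=\inf\{\|h-g\|_X:g\in X_a\}$. *)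

(* Defs.v *)
From Stdlib Require Import Reals List.
From Coquelicot Require Import Coquelicot.
Open Scope R_scope.

(** Real sequences indexed by nat (= counting measure on N, 0-based). *)
Definition seqR := nat -> R.

Definition sadd (x y : seqR) : seqR := fun n => x n + y n.
Definition ssub (x y : seqR) : seqR := fun n => x n - y n.
Definition sscal (c : R) (x : seqR) : seqR := fun n => c * x n.

Definition atmost (k : nat) (A : nat -> Prop) : Prop :=
  exists l : list nat, (length l <= k)%nat /\ forall n, A n -> In n l.

Definition equinum (A B : nat -> Prop) : Prop :=
  exists f : nat -> nat,
    (forall n, A n -> B (f n)) /\
    (forall m n, A m -> A n -> f m = f n -> m = n) /\
    (forall m, B m -> exists n, A n /\ f n = m).

(** {n : |x_n| > lam}; its cardinality is d_x(lam). *)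
Definition level_set (x : seqR) (lam : R) : nat -> Prop :=
  fun n => Rabs (x n) > lam.

Definition equimeasurable (x y : seqR) : Prop :=
  forall lam, 0 <= lam -> equinum (level_set x lam) (level_set y lam).

Definition ncauchy (nrm : seqR -> R) (xs : nat -> seqR) : Prop :=
  forall eps, eps > 0 -> exists N, forall p q, (p >= N)%nat -> (q >= N)%nat ->
    nrm (ssub (xs p) (xs q)) < eps.

Definition banach_seq_space (X : seqR -> Prop) (nrm : seqR -> R) : Prop :=
  X (fun _ => 0) /\
  (forall x y, X x -> X y -> X (sadd x y)) /\
  (forall c x, X x -> X (sscal c x)) /\
  (forall x, X x -> 0 <= nrm x) /\
  (forall x, X x -> nrm x = 0 -> forall n, x n = 0) /\
  (forall c x, X x -> nrm (sscal c x) = Rabs c * nrm x) /\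
  (forall x y, X x -> X y -> nrm (sadd x y) <= nrm x + nrm y) /\
  (forall xs : nat -> seqR, (forall k, X (xs k)) -> ncauchy nrm xs ->
     exists x, X x /\ Un_cv (fun k => nrm (ssub (xs k) x)) 0).

Definition ri_space (X : seqR -> Prop) (nrm : seqR -> R) : Prop :=
  banach_seq_space X nrm /\
  (forall x y, X y -> (forall n, Rabs (x n) <= Rabs (y n)) -> X x /\ nrm x <= nrm y) /\
  (exists y, X y /\ forall n, y n <> 0) /\
  (forall x y, X x -> equimeasurable x y -> X y /\ nrm y = nrm x).

Definition fatou_property (X : seqR -> Prop) (nrm : seqR -> R) : Prop :=
  forall (xs : nat -> seqR) (x : seqR),
    (forall k n, 0 <= xs k n) ->
    (forall k n, xs k n <= xs (S k) n) ->
    (forall n, Un_cv (fun k => xs k n) (x n)) ->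
    (forall k, X (xs k)) ->
    (exists M, forall k, nrm (xs k) <= M) ->
    X x /\ (forall k, nrm (xs k) <= nrm (xs (S k))) /\
    Un_cv (fun k => nrm (xs k)) (nrm x).

(** Non-increasing rearrangement; (fstar f) k is f^*_{k+1} of the paper:
    f^*_{k+1} = inf {lam > 0 : d_f(lam) < k+1}. *)
Definition fstar (f : seqR) : seqR :=
  fun k => real (Glb_Rbar (fun lam => 0 < lam /\ atmost k (level_set f lam))).

Definition order_continuous (X : seqR -> Prop) (nrm : seqR -> R) (x : seqR) : Prop :=
  X x /\
  forall xs : nat -> seqR,
    (forall k n, 0 <= xs k n <= Rabs (x n)) ->
    (forall k n, xs (S k) n <= xs k n) ->
    (forall n, Un_cv (fun k => xs k n) 0) ->
    Un_cv (fun k => nrm (xs k)) 0.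

Definition dist_Xa (X : seqR -> Prop) (nrm : seqR -> R) (h : seqR) : R :=
  real (Glb_Rbar (fun r => exists g, order_continuous X nrm g /\ r = nrm (ssub h g))).

(* Main.v *)
Require Import Defs.
From Stdlib Require Import Reals List Lia Lra Classical ClassicalEpsilon.
From Coquelicot Require Import Coquelicot.
Open Scope R_scope.

Definition dec (P : Prop) : bool := if excluded_middle_informative P then true else false.
Lemma decP (P : Prop) : dec P = true <-> P.
Proof. unfold dec; destruct (excluded_middle_informative P); split; auto; discriminate. Qed.
Lemma decF (P : Prop) : dec P = false <-> ~ P.
Proof. unfold dec; destruct (excluded_middle_informative P); split; auto; try discriminate; tauto. Qed.

Lemma atmost_mono (A B : nat -> Prop) k : (forall n, A n -> B n) -> atmost k B -> atmost k A.
Proof. intros H [l [H1 H2]]; exists l; split; auto. Qed.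
Lemma atmost_le (A : nat -> Prop) k k' : (k <= k')%nat -> atmost k A -> atmost k' A.
Proof. intros H [l [H1 H2]]; exists l; split; auto; lia. Qed.
Lemma atmost_nil (A : nat -> Prop) k : (forall n, ~ A n) -> atmost k A.
Proof. intros H; exists nil; split; simpl; [lia|]. intros n Hn; exact (H n Hn). Qed.
Lemma atmost0 (A : nat -> Prop) n : atmost 0 A -> ~ A n.
Proof. intros [l [H1 H2]] Hn. destruct l; [exact (H2 n Hn)| simpl in H1; lia]. Qed.

Lemma PH (A : nat -> Prop) l i : NoDup l -> (forall x, In x l -> A x) -> atmost i A -> (length l <= i)%nat.
Proof.
  intros Hn Hl [l' [H1 H2]].
  assert (length l <= length l')%nat; [|lia].
  apply NoDup_incl_length; auto. intros x Hx; auto.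
Qed.

Fixpoint cnt (A : nat -> Prop) (n : nat) : nat :=
  match n with O => O | S n => (cnt A n + (if dec (A n) then 1 else 0))%nat end.

Definition flist (A : nat -> Prop) n := filter (fun x => dec (A x)) (seq 0 n).

Lemma flist_len A n : length (flist A n) = cnt A n.
Proof.
  induction n; simpl; auto. unfold flist in *. rewrite seq_S, filter_app, length_app, IHn.
  simpl. destruct (dec (A n)); simpl; lia.
Qed.
Lemma flist_nodup A n : NoDup (flist A n).
Proof. apply NoDup_filter, seq_NoDup. Qed.
Lemma flist_in A n x : In x (flist A n) <-> (x < n)%nat /\ A x.
Proof. unfold flist. rewrite filter_In, in_seq, decP. split; intros [H1 H2]; split; auto; lia. Qed.

Lemma cnt_mono A m n : (m <= n)%nat -> (cnt A m <= cnt A n)%nat.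
Proof. induction 1; simpl; auto. lia. Qed.

Lemma list_bound (l : list nat) : exists N, forall x, In x l -> (x < N)%nat.
Proof.
  induction l as [|a l [N HN]]; [exists O; simpl; tauto|].
  exists (S (Nat.max a N)); simpl; intros x [->|Hx]; [lia|]. specialize (HN x Hx); lia.
Qed.

Lemma NA (A : nat -> Prop) i : ~ atmost i A ->
  exists l, NoDup l /\ (forall x, In x l -> A x) /\ (i < length l)%nat.
Proof.
  intros H. apply NNPP; intros H'.
  assert (Hc : forall N, (cnt A N <= i)%nat).
  { intros N. rewrite <- flist_len. apply NNPP; intro Hn; apply H'. exists (flist A N).
    split; [apply flist_nodup|]. split; [intros x Hx; apply flist_in in Hx; tauto| lia]. }
  assert (Hmax : exists N0, forall N, (cnt A N <= cnt A N0)%nat).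
  { apply NNPP; intro Hm.
    assert (forall k, exists N, (k <= cnt A N)%nat).
    { induction k. exists O; lia. destruct IHk as [N HN].
      destruct (not_all_ex_not _ _ (not_ex_all_not _ _ Hm N)) as [N' HN'].
      exists N'; lia. }
    destruct (H0 (S i)) as [N HN]. specialize (Hc N); lia. }
  destruct Hmax as [N0 HN0]. apply H. exists (flist A N0). split; [rewrite flist_len; auto|].
  intros n Hn. apply flist_in. split; auto.
  destruct (Nat.lt_ge_cases n N0) as [|Hge]; auto.
  exfalso. specialize (HN0 (S n)). simpl in HN0. apply (proj2 (decP _)) in Hn; rewrite Hn in HN0.
  pose proof (cnt_mono A _ _ Hge); lia.
Qed.

Lemma split_lem (A B C : nat -> Prop) a b :
  (forall x, A x -> C x) -> (forall x, B x -> C x) -> (forall x, A x -> B x -> False) ->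
  atmost (S a + b) C -> ~ atmost a A -> atmost b B.
Proof.
  intros HA HB HD [l [Hl Hc]] Ha.
  destruct (NA _ _ Ha) as [lA [HnA [HinA HlenA]]].
  exists (filter (fun x => negb (dec (A x))) l). split.
  - pose proof (filter_length (fun x => dec (A x)) l).
    assert (length lA <= length (filter (fun x => dec (A x)) l))%nat.
    { apply NoDup_incl_length; auto. intros x Hx. apply filter_In. split; [apply Hc; auto|].
      apply decP; auto. }
    lia.
  - intros x Hx. apply filter_In. split; auto.
    destruct (dec (A x)) eqn:E; auto. apply (proj1 (decP _)) in E. exfalso; eauto.
Qed.

Lemma BL (A : nat -> Prop) n : atmost n (fun i => ~ atmost i A) -> atmost n A.
Proof.
  intros H. apply NNPP; intro Hn.
  assert (S n <= n)%nat; [|lia].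
  rewrite <- (length_seq (S n) 0). eapply PH; eauto. apply seq_NoDup.
  intros x Hx. apply in_seq in Hx. intro Hx'. apply Hn. eapply atmost_le; [|eauto]. lia.
Qed.

Lemma fin_above (g : nat -> R) lam (P : nat -> Prop) l :
  (forall x, P x -> In x l) -> (forall x, P x -> lam < g x) ->
  exists mu, lam < mu /\ forall x, P x -> mu < g x.
Proof.
  revert P; induction l as [|a l IH]; intros P Hc Hg.
  - exists (lam + 1). split; [lra|]. intros x Hx; destruct (Hc x Hx).
  - destruct (IH (fun x => P x /\ x <> a)) as [mu [H1 H2]].
    + intros x [Hx Hn]. destruct (Hc x Hx); auto. congruence.
    + intros x [Hx _]; auto.
    + destruct (classic (P a)) as [Pa|Pa].
      * exists (Rmin mu ((lam + g a)/2)). pose proof (Hg a Pa). split.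
        { apply Rmin_case; lra. }
        intros x Hx. destruct (Nat.eq_dec x a) as [->|Hn].
        { pose proof (Rmin_r mu ((lam + g a)/2)); lra. }
        pose proof (H2 x (conj Hx Hn)). pose proof (Rmin_l mu ((lam + g a)/2)); lra.
      * exists mu; split; auto. intros x Hx. apply H2; split; auto. congruence.
Qed.

Lemma fin_below (g : nat -> R) v (P : nat -> Prop) l :
  (forall x, P x -> In x l) -> (forall x, P x -> g x < v) ->
  exists mu, mu < v /\ forall x, P x -> g x < mu.
Proof.
  intros Hc Hg. destruct (fin_above (fun x => - g x) (-v) P l Hc) as [mu [H1 H2]].
  { intros x Hx; specialize (Hg x Hx); lra. }
  exists (-mu); split; [lra|]. intros x Hx; specialize (H2 x Hx); lra.
Qed.
Lemma glb_facts (S : R -> Prop) : (exists s, S s) -> (forall s, S s -> 0 <= s) ->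
  (forall s, S s -> real (Glb_Rbar S) <= s) /\
  (forall b, (forall s, S s -> b <= s) -> b <= real (Glb_Rbar S)) /\ 0 <= real (Glb_Rbar S).
Proof.
  intros [s0 Hs0] Hpos.
  pose proof (Glb_Rbar_correct S) as [Hlb Hg].
  assert (H0 : Rbar_le (Finite 0) (Glb_Rbar S)) by (apply Hg; intros x Hx; simpl; auto).
  pose proof (Hlb s0 Hs0) as H1.
  destruct (Glb_Rbar S) as [g| |]; simpl in *; try contradiction.
  split; [intros s Hs; exact (Hlb s Hs)|]. split; auto.
  intros b Hb. exact (Hg (Finite b) Hb).
Qed.

Lemma CH (f : seqR) B i lam : (forall n, Rabs (f n) <= B) -> 0 <= lam ->
  (fstar f i > lam <-> ~ atmost i (level_set f lam)).
Proof.
  intros HB Hlam. unfold fstar.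
  set (S := fun mu => 0 < mu /\ atmost i (level_set f mu)).
  destruct (glb_facts S) as [Hlb [Hgl Hg0]].
  { exists (Rmax B 0 + 1). split. pose proof (Rmax_r B 0); lra.
    apply atmost_nil. intros n Hn. unfold level_set in Hn. pose proof (HB n). pose proof (Rmax_l B 0); lra. }
  { intros s [Hs _]; lra. }
  set (g := real (Glb_Rbar S)) in *.
  split.
  - intros Hgt Hat. assert (g <= lam); [|lra].
    apply Rnot_gt_le; intro Hc.
    assert (S ((g + lam)/2)).
    { split; [lra|]. eapply atmost_mono; [|exact Hat]. intros n Hn; unfold level_set in *; lra. }
    specialize (Hlb _ H); lra.
  - intros Hna. apply Rnot_le_gt; intro Hle. apply Hna.
    apply NNPP; intro Hn. destruct (NA _ _ Hn) as [l [Hnd [Hin Hlen]]].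
    destruct (fin_above (fun x => Rabs (f x)) lam (fun x => In x l) l) as [mu [Hmu1 Hmu2]]; auto.
    assert (exists s, S s /\ s < mu) as [s [[Hs1 Hs2] Hs3]].
    { apply NNPP; intro Hne. assert (mu <= g); [|lra]. apply Hgl. intros s Hs.
      apply Rnot_lt_le; intro; apply Hne; eauto. }
    assert (length l <= i)%nat; [|lia].
    apply (PH (level_set f s) l i Hnd); auto. intros x Hx. unfold level_set. specialize (Hmu2 x Hx); simpl in Hmu2; lra.
Qed.

Lemma fstar_nonneg (f : seqR) B i : (forall n, Rabs (f n) <= B) -> 0 <= fstar f i.
Proof.
  intros HB. unfold fstar. apply glb_facts.
  { exists (Rmax B 0 + 1). split. pose proof (Rmax_r B 0); lra.
    apply atmost_nil. intros n Hn. unfold level_set in Hn. pose proof (HB n). pose proof (Rmax_l B 0); lra. }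
  { intros s [Hs _]; lra. }
Qed.

Lemma fstar_mono (f : seqR) B m i : (forall n, Rabs (f n) <= B) -> (m <= i)%nat -> fstar f i <= fstar f m.
Proof.
  intros HB Hmi. apply Rnot_gt_le; intro Hc.
  pose proof (fstar_nonneg f B m HB).
  set (lam := (fstar f i + fstar f m)/2).
  assert (Hl : 0 <= lam) by (unfold lam; lra).
  pose proof (proj1 (CH f B i lam HB Hl)) as H1.
  pose proof (CH f B m lam HB Hl) as H2.
  apply H1. unfold lam; lra.
  apply atmost_le with m; auto. apply NNPP; intro Hn. apply H2 in Hn. unfold lam in Hn; lra.
Qed.

Lemma equinum_ext (A A' B B' : nat -> Prop) : (forall n, A n <-> A' n) -> (forall n, B n <-> B' n) ->
  equinum A B -> equinum A' B'.
Proof.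
  intros HA HB [g [H1 [H2 H3]]]. exists g. split; [|split].
  - intros n Hn; apply HB, H1, HA; auto.
  - intros m n Hm Hn; apply H2; apply HA; auto.
  - intros m Hm. destruct (H3 m (proj2 (HB m) Hm)) as [n [Hn1 Hn2]]. exists n; split; auto; apply HA; auto.
Qed.

Lemma equinum_sym (A B : nat -> Prop) : equinum A B -> equinum B A.
Proof.
  intros [g [H1 [H2 H3]]].
  set (h := fun m => match excluded_middle_informative (exists n, A n /\ g n = m) with
                     | left H => proj1_sig (constructive_indefinite_description _ H)
                     | right _ => O end).
  assert (Hh : forall m, B m -> A (h m) /\ g (h m) = m).
  { intros m Hm. unfold h. destruct (excluded_middle_informative _) as [H|H].
    - destruct (constructive_indefinite_description _ H); simpl; auto.
    - exfalso; apply H; auto. }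
  exists h. split; [|split].
  - intros m Hm; apply Hh; auto.
  - intros m n Hm Hn Heq. destruct (Hh m Hm) as [_ E1]; destruct (Hh n Hn) as [_ E2]. congruence.
  - intros m Hm. exists (g m). split; auto. destruct (Hh (g m) (H1 m Hm)) as [Ha Hg].
    apply H2; auto.
Qed.

Lemma cnt_hit (A : nat -> Prop) j N : (j < cnt A N)%nat -> exists n, A n /\ cnt A n = j.
Proof.
  induction N; simpl; [lia|]. intros H.
  destruct (Nat.lt_ge_cases j (cnt A N)); auto.
  destruct (dec (A N)) eqn:E.
  - exists N. split; [apply (proj1 (decP _)); auto| lia].
  - lia.
Qed.

Lemma equinum_cnt (A : nat -> Prop) : equinum A (fun i => ~ atmost i A).
Proof.
  exists (cnt A). split; [|split].
  - intros n Hn Hat. assert (length (flist A (S n)) <= cnt A n)%nat.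
    { eapply PH; eauto. apply flist_nodup. intros x Hx; apply flist_in in Hx; tauto. }
    rewrite flist_len in H. simpl in H. rewrite (proj2 (decP _) Hn) in H. lia.
  - intros m n Hm Hn Heq.
    destruct (Nat.lt_trichotomy m n) as [Hlt|[Heq'|Hlt]]; auto; exfalso.
    + pose proof (cnt_mono A (S m) n Hlt). simpl in H. rewrite (proj2 (decP _) Hm) in H. lia.
    + pose proof (cnt_mono A (S n) m Hlt). simpl in H. rewrite (proj2 (decP _) Hn) in H. lia.
  - intros j Hj. destruct (NA _ _ Hj) as [l [Hnd [Hin Hlen]]].
    destruct (list_bound l) as [N HN].
    apply (cnt_hit A j N).
    assert (length l <= length (flist A N))%nat.
    { apply NoDup_incl_length; auto. intros x Hx. apply flist_in; auto. }
    rewrite flist_len in H; lia.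
Qed.

Lemma equimeas_star (f : seqR) B : (forall n, Rabs (f n) <= B) ->
  equimeasurable f (fstar f) /\ equimeasurable (fstar f) f.
Proof.
  intros HB. split; intros lam Hlam.
  - eapply equinum_ext; [| |apply (equinum_cnt (level_set f lam))]; [tauto|].
    intros n. unfold level_set at 2. rewrite Rabs_right by (apply Rle_ge, (fstar_nonneg f B n HB)).
    rewrite (CH f B n lam HB Hlam). tauto.
  - apply equinum_sym.
    eapply equinum_ext; [| |apply (equinum_cnt (level_set f lam))]; [tauto|].
    intros n. unfold level_set at 2. rewrite Rabs_right by (apply Rle_ge, (fstar_nonneg f B n HB)).
    rewrite (CH f B n lam HB Hlam). tauto.
Qed.
Lemma ri_ideal X nrm (HX : ri_space X nrm) x y : X y -> (forall n, Rabs (x n) <= Rabs (y n)) -> X x /\ nrm x <= nrm y.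
Proof. destruct HX as [_ [Hid _]]. apply Hid. Qed.
Lemma ri_pos X nrm (HX : ri_space X nrm) x : X x -> 0 <= nrm x.
Proof. destruct HX as [[_ [_ [_ [Hp _]]]] _]. apply Hp. Qed.
Lemma ri_inv X nrm (HX : ri_space X nrm) x y : X x -> equimeasurable x y -> X y /\ nrm y = nrm x.
Proof. destruct HX as [_ [_ [_ Hri]]]. apply Hri. Qed.
Lemma ri_add X nrm (HX : ri_space X nrm) x y : X x -> X y -> X (sadd x y) /\ nrm (sadd x y) <= nrm x + nrm y.
Proof. destruct HX as [[_ [Ha [_ [_ [_ [_ [Ht _]]]]]]] _]. auto. Qed.
Lemma ri_scal X nrm (HX : ri_space X nrm) c x : X x -> X (sscal c x) /\ nrm (sscal c x) = Rabs c * nrm x.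
Proof. destruct HX as [[_ [_ [Hs [_ [_ [Hn _]]]]]] _]. auto. Qed.
Lemma ri_zero X nrm (HX : ri_space X nrm) : X (fun _ => 0).
Proof. destruct HX as [[H0 _] _]. auto. Qed.
Lemma ri_eq X nrm (HX : ri_space X nrm) x y : X y -> (forall n, Rabs (x n) = Rabs (y n)) -> X x /\ nrm x = nrm y.
Proof.
  intros Hy He. destruct (ri_ideal X nrm HX x y Hy) as [Hx H1]. intros n; rewrite He; lra.
  split; auto. destruct (ri_ideal X nrm HX y x Hx) as [_ H2]. intros n; rewrite He; lra. lra.
Qed.

Definition ev (n : nat) : seqR := fun m => if Nat.eqb m n then 1 else 0.

Lemma ev0 X nrm (HX : ri_space X nrm) : X (ev 0) /\ 0 < nrm (ev 0).
Proof.
  pose proof HX as HX'. destruct HX' as [[_ [_ [_ [_ [Hz _]]]]] [_ [[y [Hy Hy0]] _]]].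
  assert (Hyp : 0 < Rabs (y 0%nat)) by (apply Rabs_pos_lt; auto).
  destruct (ri_scal X nrm HX (/ Rabs (y 0%nat)) y Hy) as [Hs _].
  destruct (ri_ideal X nrm HX (ev 0) _ Hs) as [Hx _].
  { intros n. unfold ev, sscal. destruct (Nat.eqb n 0) eqn:E.
    - apply Nat.eqb_eq in E; subst. rewrite Rabs_mult, Rabs_inv, Rabs_Rabsolu.
      rewrite Rinv_l by lra. rewrite Rabs_R1; lra.
    - rewrite Rabs_R0. apply Rabs_pos. }
  split; auto. destruct (Rle_lt_or_eq_dec _ _ (ri_pos X nrm HX _ Hx)) as [|Heq]; auto.
  exfalso. pose proof (Hz _ Hx (eq_sym Heq) 0%nat). unfold ev in H. simpl in H. lra.
Qed.

Lemma evn X nrm (HX : ri_space X nrm) n : X (ev n) /\ nrm (ev n) = nrm (ev 0).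
Proof.
  apply (ri_inv X nrm HX). apply (ev0 X nrm HX).
  intros lam Hlam. exists (fun _ => n). unfold level_set, ev. split; [|split].
  - intros m Hm. destruct (Nat.eqb m 0); rewrite ?Nat.eqb_refl in *; rewrite ?Rabs_R0 in *; lra.
  - intros a b Ha Hb _. destruct (Nat.eqb a 0) eqn:E1; [|rewrite Rabs_R0 in Ha; lra].
    destruct (Nat.eqb b 0) eqn:E2; [|rewrite Rabs_R0 in Hb; lra].
    apply Nat.eqb_eq in E1, E2; lia.
  - intros m Hm. destruct (Nat.eqb m n) eqn:E; [|rewrite Rabs_R0 in Hm; lra].
    apply Nat.eqb_eq in E. exists 0%nat. simpl. split; auto.
Qed.

Lemma bounded X nrm (HX : ri_space X nrm) f : X f -> forall n, Rabs (f n) <= nrm f / nrm (ev 0).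
Proof.
  intros Hf n. destruct (ev0 X nrm HX) as [_ Hp]. destruct (evn X nrm HX n) as [Hen Hen'].
  destruct (ri_scal X nrm HX (f n) (ev n) Hen) as [Hs Hsn].
  destruct (ri_ideal X nrm HX (sscal (f n) (ev n)) f Hf) as [_ Hle]; [|].
  2:{ rewrite Hsn, Hen' in Hle. apply Rmult_le_reg_r with (nrm (ev 0)); auto.
      unfold Rdiv; rewrite Rmult_assoc, Rinv_l by lra. lra. }
  intros m. unfold sscal, ev. destruct (Nat.eqb m n) eqn:E.
  - apply Nat.eqb_eq in E; subst. rewrite Rmult_1_r; lra.
  - rewrite Rmult_0_r, Rabs_R0. apply Rabs_pos.
Qed.

Lemma star_in X nrm (HX : ri_space X nrm) h : X h -> X (fstar h) /\ nrm (fstar h) = nrm h.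
Proof.
  intros Hh. apply (ri_inv X nrm HX); auto. apply (equimeas_star h _ (bounded X nrm HX h Hh)).
Qed.

Lemma Mlem X nrm (HX : ri_space X nrm) g h : X h ->
  (forall lam, 0 <= lam -> forall j, atmost j (level_set h lam) -> atmost j (level_set g lam)) ->
  X g /\ nrm g <= nrm h.
Proof.
  intros Hh Hgh.
  set (B := nrm h / nrm (ev 0)). pose proof (bounded X nrm HX h Hh) as HBh. fold B in HBh.
  assert (HB0 : 0 <= B) by (pose proof (HBh 0%nat); pose proof (Rabs_pos (h 0%nat)); lra).
  assert (HBg : forall n, Rabs (g n) <= B + 1).
  { intros n. apply Rnot_lt_le; intro Hc.
    assert (atmost 0 (level_set g (B+1))).
    { apply Hgh; [lra|]. apply atmost_nil. intros m Hm; unfold level_set in Hm; specialize (HBh m); lra. }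
    apply (atmost0 _ n H). unfold level_set; lra. }
  assert (Hle : forall i, fstar g i <= fstar h i).
  { intros i. apply Rnot_gt_le; intro Hc.
    pose proof (fstar_nonneg h B i HBh).
    set (lam := (fstar g i + fstar h i)/2).
    assert (Hl : 0 <= lam) by (unfold lam; lra).
    assert (Hg1 : ~ atmost i (level_set g lam)) by (apply (CH g (B+1) i lam HBg Hl); unfold lam; lra).
    apply Hg1, Hgh; auto. apply NNPP; intro Hn. apply (CH h B i lam HBh Hl) in Hn. unfold lam in Hn; lra. }
  destruct (star_in X nrm HX h Hh) as [Hsh Hsh'].
  destruct (ri_ideal X nrm HX (fstar g) (fstar h) Hsh) as [Hsg Hsg'].
  { intros i. rewrite !Rabs_right; try (apply Rle_ge; eapply fstar_nonneg; eauto). auto. }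
  destruct (ri_inv X nrm HX (fstar g) g Hsg) as [Hg Hg'].
  { apply (equimeas_star g _ HBg). }
  split; auto. lra.
Qed.
Definition tail (k : nat) (x : seqR) : seqR := fun n => if Nat.leb k n then x n else 0.
Definition head (k : nat) (x : seqR) : seqR := fun n => if Nat.leb k n then 0 else x n.
Definition wk (k : nat) : seqR := fun n => if Nat.leb k n then 0 else 1.
Fixpoint psum (a : nat -> R) (k : nat) : R := match k with O => 0 | S k => psum a k + a k end.

Lemma ri_sub X nrm (HX : ri_space X nrm) x y : X x -> X y -> X (ssub x y) /\ nrm (ssub x y) <= nrm x + nrm y.
Proof.
  intros Hx Hy. destruct (ri_scal X nrm HX (-1) y Hy) as [Hs Hsn].
  destruct (ri_add X nrm HX x _ Hx Hs) as [Ha Han].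
  destruct (ri_eq X nrm HX (ssub x y) _ Ha) as [H1 H2].
  { intros n; unfold ssub, sadd, sscal. f_equal. ring. }
  split; auto. rewrite H2. rewrite Hsn in Han. replace (Rabs (-1)) with 1 in Han by (rewrite Rabs_left; lra). lra.
Qed.

Lemma tail_in X nrm (HX : ri_space X nrm) k x : X x -> X (tail k x) /\ nrm (tail k x) <= nrm x.
Proof.
  intros Hx. apply (ri_ideal X nrm HX); auto. intros n; unfold tail; destruct (Nat.leb k n); [lra|].
  rewrite Rabs_R0; apply Rabs_pos.
Qed.

Lemma wk_in X nrm (HX : ri_space X nrm) k : X (wk k).
Proof.
  induction k.
  - apply (ri_ideal X nrm HX (wk 0) _ (ri_zero X nrm HX)). intros n; unfold wk; simpl; lra.
  - destruct (evn X nrm HX k) as [He _].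
    destruct (ri_add X nrm HX _ _ IHk He) as [Ha _].
    apply (ri_ideal X nrm HX (wk (S k)) _ Ha). intros n; unfold wk, sadd, ev.
    destruct (Nat.leb (S k) n) eqn:E1; [rewrite Rabs_R0; apply Rabs_pos|].
    apply Nat.leb_gt in E1.
    destruct (Nat.lt_ge_cases n k) as [Hl|Hl].
    + replace (Nat.leb k n) with false by (symmetry; apply Nat.leb_gt; lia).
      replace (Nat.eqb n k) with false by (symmetry; apply Nat.eqb_neq; lia).
      rewrite Rplus_0_r; lra.
    + replace (Nat.leb k n) with true by (symmetry; apply Nat.leb_le; lia).
      replace (Nat.eqb n k) with true by (symmetry; apply Nat.eqb_eq; lia).
      rewrite Rplus_0_l; lra.
Qed.

Lemma psum_ge (a : nat -> R) k n : (forall m, 0 <= a m) -> (n < k)%nat -> a n <= psum a k.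
Proof.
  intros Ha; induction k; simpl; intros H; [lia|].
  assert (0 <= psum a k).
  { clear IHk H. induction k; simpl; [lra|]. pose proof (Ha k); lra. }
  destruct (Nat.eq_dec n k) as [->|Hn]; [lra|]. pose proof (Ha k). assert (n < k)%nat by lia. specialize (IHk H2); lra.
Qed.

Lemma psum_nonneg (a : nat -> R) k : (forall m, 0 <= a m) -> 0 <= psum a k.
Proof. intros Ha; induction k; simpl; [lra|]. pose proof (Ha k); lra. Qed.

Lemma cv_const (c : R) : Un_cv (fun _ => c) c.
Proof. intros eps He; exists O; intros n _. unfold Rdist. replace (c - c) with 0 by ring. rewrite Rabs_R0; lra. Qed.

Lemma psum_cv (a : nat -> nat -> R) k : (forall n, Un_cv (fun j => a j n) 0) ->
  Un_cv (fun j => psum (a j) k) 0.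
Proof.
  intros Ha. induction k; simpl.
  - intros eps He; exists O; intros; unfold R_dist; rewrite Rminus_0_r, Rabs_R0; lra.
  - pose proof (CV_plus _ _ _ _ IHk (Ha k)). rewrite Rplus_0_r in H. exact H.
Qed.

Lemma squeeze (u v : nat -> R) : (forall j, 0 <= u j <= v j) -> Un_cv v 0 -> Un_cv u 0.
Proof.
  intros Huv Hv eps He. destruct (Hv eps He) as [N HN]. exists N. intros n Hn.
  specialize (HN n Hn). specialize (Huv n). unfold R_dist in *. rewrite Rminus_0_r in *.
  rewrite Rabs_right in * by lra. lra.
Qed.

Lemma head_oc X nrm (HX : ri_space X nrm) k h : X h -> order_continuous X nrm (head k h).
Proof.
  intros Hh. split.
  { apply (ri_ideal X nrm HX _ h Hh). intros n; unfold head; destruct (Nat.leb k n); [|lra].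
    rewrite Rabs_R0; apply Rabs_pos. }
  intros xs H1 H2 H3.
  pose proof (wk_in X nrm HX k) as Hw.
  apply squeeze with (fun j => psum (xs j) k * nrm (wk k)).
  - intros j.
    destruct (ri_scal X nrm HX (psum (xs j) k) (wk k) Hw) as [Hs Hsn].
    assert (Hp : 0 <= psum (xs j) k).
    { apply psum_nonneg. intros m; apply H1. }
    destruct (ri_ideal X nrm HX (xs j) _ Hs) as [Hxj Hle].
    { intros n. unfold sscal, wk. destruct (H1 j n) as [H1a H1b]. unfold head in H1b.
      rewrite (Rabs_right (xs j n)) by lra.
      destruct (Nat.leb k n) eqn:E.
      - rewrite Rabs_R0 in H1b. rewrite Rmult_0_r, Rabs_R0; lra.
      - apply Nat.leb_gt in E. rewrite Rmult_1_r, Rabs_right by lra.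
        apply psum_ge; auto. intros m; apply H1. }
    split; [apply (ri_pos X nrm HX); auto|]. rewrite Hsn, Rabs_right in Hle by lra. lra.
  - pose proof (CV_mult _ _ _ _ (psum_cv xs k H3) (cv_const (nrm (wk k)))).
    rewrite Rmult_0_l in H. exact H.
Qed.

Lemma tail_oc X nrm (HX : ri_space X nrm) g : order_continuous X nrm g -> Un_cv (fun k => nrm (tail k g)) 0.
Proof.
  intros [Hg Hoc].
  set (xs := fun k n => if Nat.leb k n then Rabs (g n) else 0).
  assert (Hcv : Un_cv (fun k => nrm (xs k)) 0).
  { apply Hoc.
    - intros k n; unfold xs; destruct (Nat.leb k n); split; try lra; apply Rabs_pos.
    - intros k n; unfold xs. destruct (Nat.leb (S k) n) eqn:E1.
      + apply Nat.leb_le in E1. replace (Nat.leb k n) with true by (symmetry; apply Nat.leb_le; lia). lra.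
      + destruct (Nat.leb k n); [apply Rabs_pos|lra].
    - intros n eps He. exists (S n). intros m Hm. unfold xs.
      replace (Nat.leb m n) with false by (symmetry; apply Nat.leb_gt; lia).
      unfold R_dist; rewrite Rminus_diag, Rabs_R0; lra. }
  intros eps He. destruct (Hcv eps He) as [N HN]. exists N. intros n Hn.
  destruct (tail_in X nrm HX n g Hg) as [Ht _].
  destruct (ri_eq X nrm HX (xs n) (tail n g) Ht) as [_ Heq].
  { intros m; unfold xs, tail. destruct (Nat.leb n m); [apply Rabs_Rabsolu|auto]. }
  rewrite <- Heq. auto.
Qed.

Lemma lim_le (a b : R) (c : nat -> R) : (forall k, a <= b + c k) -> Un_cv c 0 -> a <= b.
Proof.
  intros H Hc. apply Rnot_gt_le; intro Hgt. destruct (Hc (a - b)) as [N HN]; [lra|].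
  specialize (HN N (le_n N)). specialize (H N). unfold R_dist in HN. rewrite Rminus_0_r in HN.
  pose proof (Rle_abs (c N)). lra.
Qed.

Lemma dist_facts X nrm (HX : ri_space X nrm) h : X h ->
  (forall g, order_continuous X nrm g -> dist_Xa X nrm h <= nrm (ssub h g)) /\
  (forall b, (forall g, order_continuous X nrm g -> b <= nrm (ssub h g)) -> b <= dist_Xa X nrm h).
Proof.
  intros Hh. unfold dist_Xa.
  destruct (glb_facts (fun r => exists g, order_continuous X nrm g /\ r = nrm (ssub h g))) as [H1 [H2 _]].
  - exists (nrm (ssub h (head 0 h))). exists (head 0 h); split; auto. apply head_oc; auto.
  - intros s [g [[Hg _] ->]]. apply (ri_pos X nrm HX). apply (ri_sub X nrm HX); auto.
  - split.
    + intros g Hg. apply H1. eauto.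
    + intros b Hb. apply H2. intros s [g [Hg ->]]. auto.
Qed.

Lemma dist_tail X nrm (HX : ri_space X nrm) h k : X h -> dist_Xa X nrm h <= nrm (tail k h).
Proof.
  intros Hh. destruct (dist_facts X nrm HX h Hh) as [H1 _].
  pose proof (H1 (head k h) (head_oc X nrm HX k h Hh)).
  destruct (tail_in X nrm HX k h Hh) as [Ht _].
  destruct (ri_eq X nrm HX (ssub h (head k h)) (tail k h) Ht) as [_ Heq].
  { intros n; unfold ssub, head, tail. destruct (Nat.leb k n); f_equal; ring. }
  lra.
Qed.

Lemma tri_tail X nrm (HX : ri_space X nrm) f g k : X f -> order_continuous X nrm g ->
  nrm (tail k f) <= nrm (ssub f g) + nrm (tail k g).
Proof.
  intros Hf [Hg _].
  destruct (ri_sub X nrm HX f g Hf Hg) as [Hs _].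
  destruct (tail_in X nrm HX k _ Hs) as [Ht1 Ht1'].
  destruct (tail_in X nrm HX k g Hg) as [Ht2 _].
  destruct (ri_add X nrm HX _ _ Ht1 Ht2) as [Ha Han].
  destruct (ri_eq X nrm HX (tail k f) _ Ha) as [_ Heq].
  { intros n; unfold tail, sadd, ssub. destruct (Nat.leb k n); f_equal; ring. }
  lra.
Qed.
Lemma Tlem (f : seqR) B (HB : forall n, Rabs (f n) <= B) m : exists T : list nat,
  forall lam, 0 <= lam -> forall j,
    atmost j (fun i => (m <= i)%nat /\ fstar f i > lam) ->
    atmost j (fun n => level_set f lam n /\ ~ In n T).
Proof.
  induction m as [|m IH].
  - exists nil. intros lam Hl j H. apply atmost_mono with (level_set f lam); [tauto|].
    apply BL. eapply atmost_mono; [|exact H]. intros i Hi. split; [lia|].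
    apply (CH f B i lam HB Hl); auto.
  - destruct IH as [T HT].
    assert (A1 : forall lam, fstar f m <= lam -> atmost 0 (fun i => (m <= i)%nat /\ fstar f i > lam)).
    { intros lam Hle. apply atmost_nil. intros i [Hi1 Hi2]. pose proof (fstar_mono f B m i HB Hi1). lra. }
    assert (A2 : forall lam j, fstar f m > lam -> atmost j (fun i => (S m <= i)%nat /\ fstar f i > lam) ->
                  atmost (S j) (fun i => (m <= i)%nat /\ fstar f i > lam)).
    { intros lam j Hgt [l [Hl Hc]]. exists (m :: l). split; [simpl; lia|].
      intros i [Hi1 Hi2]. destruct (Nat.eq_dec i m) as [->|Hn]; [left; auto|right; apply Hc; split; auto; lia]. }
    assert (Emp : forall T' lam, 0 <= lam -> fstar f m <= lam -> (forall n, In n T -> In n T') -> forall j,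
                  atmost j (fun n => level_set f lam n /\ ~ In n T')).
    { intros T' lam Hl Hle Hsub j. apply atmost_nil. intros n [Hn1 Hn2].
      apply (atmost0 _ n (HT lam Hl 0%nat (A1 lam Hle))). split; auto. }
    destruct (classic (exists t, ~ In t T /\ fstar f m <= Rabs (f t))) as [[t [Ht1 Ht2]]|Hno].
    + exists (t :: T). intros lam Hl j H. destruct (Rle_or_lt (fstar f m) lam) as [Hle|Hgt].
      * apply Emp; auto. intros n Hn; right; auto.
      * pose proof (HT lam Hl (S j) (A2 lam j Hgt H)) as H'.
        apply (split_lem (fun n => n = t) _ (fun n => level_set f lam n /\ ~ In n T) 0%nat j); auto.
        -- intros x ->. split; auto. unfold level_set; lra.
        -- intros x [Hx1 Hx2]. split; auto. intro; apply Hx2; right; auto.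
        -- intros x -> [_ Hx]. apply Hx; left; auto.
        -- intro H0. apply (atmost0 _ t H0). reflexivity.
    + exists T. intros lam Hl j H. destruct (Rle_or_lt (fstar f m) lam) as [Hle|Hgt].
      * apply Emp; auto.
      * destruct (HT lam Hl (S j) (A2 lam j Hgt H)) as [l [_ Hcov]].
        destruct (fin_below (fun x => Rabs (f x)) (fstar f m) _ l Hcov) as [mu0 [Hmu1 Hmu2]].
        { intros x [_ Hx]. apply Rnot_le_lt; intro; apply Hno; eauto. }
        set (mu := Rmax mu0 ((lam + fstar f m)/2)).
        assert (Hm1 : lam < mu) by (unfold mu; pose proof (Rmax_r mu0 ((lam + fstar f m)/2)); lra).
        assert (Hm2 : mu < fstar f m) by (unfold mu; apply Rmax_case; lra).
        assert (Hm3 : mu0 <= mu) by (apply Rmax_l).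
        assert (Hna : ~ atmost m (level_set f mu)) by (apply (CH f B m mu HB); lra).
        apply (split_lem (level_set f mu) _ (level_set f lam) m j); auto.
        -- intros x Hx; unfold level_set in *; lra.
        -- intros x [Hx _]; auto.
        -- intros x Hx1 Hx2. specialize (Hmu2 x Hx2). unfold level_set in Hx1. simpl in Hmu2. lra.
        -- apply BL. destruct H as [l2 [Hl2 Hc2]]. exists (seq 0 (S m) ++ l2).
           split; [rewrite length_app, length_seq; lia|].
           intros i Hi. apply in_or_app. destruct (Nat.lt_ge_cases i (S m)) as [Hlt|Hge].
           ++ left; apply in_seq; lia.
           ++ right; apply Hc2. split; auto. apply (CH f B i lam HB Hl); auto.
Qed.

Theorem theorem3p6 (X : seqR -> Prop) (nrm : seqR -> R)
  (HX : ri_space X nrm) (HF : fatou_property X nrm)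
  (f : seqR) (Hf : X f) :
  dist_Xa X nrm (fstar f) = dist_Xa X nrm f.
Proof.
  destruct (star_in X nrm HX f Hf) as [Hfs _].
  pose proof (bounded X nrm HX f Hf) as HB.
  set (B := nrm f / nrm (ev 0)) in HB.
  pose proof (fun i => fstar_nonneg f B i HB) as Hnn.
  apply Rle_antisym.
  - destruct (dist_facts X nrm HX f Hf) as [_ H2]. apply H2. intros g Hg.
    apply lim_le with (c := fun k => nrm (tail k g)); [|apply (tail_oc X nrm HX); auto].
    intros k. eapply Rle_trans; [apply (dist_tail X nrm HX (fstar f) k Hfs)|].
    eapply Rle_trans; [|apply (tri_tail X nrm HX f g k Hf Hg)].
    apply (Mlem X nrm HX (tail k (fstar f)) (tail k f)); [apply (tail_in X nrm HX); auto|].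
    intros lam Hl j Hat.
    assert (Hf' : atmost (k + j) (level_set f lam)).
    { destruct Hat as [l [Hl' Hc]]. exists (seq 0 k ++ l). split; [rewrite length_app, length_seq; lia|].
      intros n Hn. apply in_or_app. destruct (Nat.lt_ge_cases n k) as [Hlt|Hge].
      - left; apply in_seq; lia.
      - right; apply Hc. unfold level_set, tail. replace (Nat.leb k n) with true by (symmetry; apply Nat.leb_le; lia). auto. }
    exists (seq k j). split; [rewrite length_seq; lia|].
    intros i Hi. unfold level_set, tail in Hi. destruct (Nat.leb k i) eqn:E.
    + apply Nat.leb_le in E. rewrite Rabs_right in Hi by (apply Rle_ge; auto).
      apply (CH f B i lam HB Hl) in Hi. apply in_seq.
      destruct (Nat.lt_ge_cases i (k + j)) as [Hlt|Hge]; [lia|].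
      exfalso; apply Hi. apply atmost_le with (k + j)%nat; auto.
    + rewrite Rabs_R0 in Hi; lra.
  - destruct (dist_facts X nrm HX (fstar f) Hfs) as [_ H2]. apply H2. intros g Hg.
    apply lim_le with (c := fun k => nrm (tail k g)); [|apply (tail_oc X nrm HX); auto].
    intros m. destruct (Tlem f B HB m) as [T HT]. destruct (list_bound T) as [k Hk].
    eapply Rle_trans; [apply (dist_tail X nrm HX f k Hf)|].
    eapply Rle_trans; [|apply (tri_tail X nrm HX (fstar f) g m Hfs Hg)].
    apply (Mlem X nrm HX (tail k f) (tail m (fstar f))); [apply (tail_in X nrm HX); auto|].
    intros lam Hl j Hat.
    apply atmost_mono with (fun n => level_set f lam n /\ ~ In n T).
    { intros n Hn. unfold level_set, tail in Hn. destruct (Nat.leb k n) eqn:E.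
      - apply Nat.leb_le in E. split; auto. intro HIn. specialize (Hk n HIn); lia.
      - rewrite Rabs_R0 in Hn; lra. }
    apply HT; auto. eapply atmost_mono; [|exact Hat].
    intros i [Hi1 Hi2]. unfold level_set, tail.
    replace (Nat.leb m i) with true by (symmetry; apply Nat.leb_le; lia).
    rewrite Rabs_right by (apply Rle_ge; auto). auto.
Qed.
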